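(* Let $R$ be any one of $Cond$, $Lex$, $Mini$, and let $R_{CB}$ be its confirmation-biased version. Then $R$ is strictly more powerful than $R_{CB}$, in the following sense: (i) for every stubbornness function $D$ and every epistemic space $\mathbb{S}$, if $\mathbb{S}$ is identifiable in the limit by $R_{CB}$ (with stubbornness function $D$), then $\mathbb{S}$ is identifiable in the limit by $R$; (ii) there exist an epistemic space $\mathbb{S}$ and a stubbornness function $D$ such that $\mathbb{S}$ is identifiable in the limit by $R$ but not by $R_{CB}$ (with stubbornness function $D$).
   Context: An epistemic space is a pair $\mathbb{S}=(S,\mathcal{O})$ where $S$ is a non-empty, at most countable set of worlds and $\mathcal{O}\subseteq\mathcal{P}(S)$ is a set of observables. A data stream is an infinite sequence $\vec O=(O_0,O_1,\ldots)$ with each $O_i\in\mathcal{O}$; $\vec O[n]$ denotes its initial segment $(O_0,\ldots,O_{n-1})$. A stream is sound for $s\in S$ if $s\in O_n$ for all $n$, and complete for $s$ if every $O\in\mathcal{O}$ with $s\in O$ occurs in $\vec O$. A plausibility space is $\mathbb{B}=(S,\mathcal{O},\preceq)$ with $\preceq$ a total preorder on $S$; $\min_\preceq X$ denotes the set of $\preceq$-minimal elements of $X$. One-step revision methods, for $\mathbb{B}=(S,\mathcal{O},\preceq)$ and a proposition $p\subseteq S$ (with $\bar p=S\setminus p$): - $Cond_1(\mathbb{B},p)=(S\cap p,\mathcal{O},\preceq\cap((S\cap p)\times(S\cap p)))$. - $Lex_1(\mathbb{B},p)=(S,\mathcal{O},\preceq')$ where $t\preceq' w$ iff ($t,w\in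 p$ and $t\preceq w$) or ($t,w\in\bar p$ and $t\preceq w$) or ($t\in p$ and $w\notin p$). - $Mini_1(\mathbb{B},p)=(S,\mathcal{O},\preceq')$ where, with $\min_p=\min_\preceq(S\cap p)$: if $t\in\min_p$ and $w\notin\min_p$ then $t\preceq' w$; otherwise $t\preceq' w$ iff $t\preceq w$. A stubbornness function is any $D:\mathcal{P}(S)\to\mathbb{N}$. For a one-step method $R_1$, the confirmation-biased iterated method is defined by $R_{CB}(\mathbb{B},\lambda)=\mathbb{B}$ ($\lambda$ the empty sequence) and $R_{CB}(\mathbb{B},\sigma\cdot p)=R_1(R_{CB}(\mathbb{B},\sigma),p)$ if $\#p(\sigma)\ge D(\bar p)$, and $R_{CB}(\mathbb{B},\sigma\cdot p)=R_{CB}(\mathbb{B},\sigma)$ otherwise, where $\#p(\sigma)$ is the number of occurrences of $p$ in the finite sequence $\sigma$. The unbiased iterated method $R$ is given by $R(\mathbb{B},\lambda)=\mathbb{B}$, $R(\mathbb{B},\sigma\cdot p)=R_1(R(\mathbb{B},\sigma),p)$. $Cond,Lex,Mini$ (resp. $Cond_{CB},Lex_{CB},Mini_{CB}$) arise from $R_1=Cond_1,Lex_1,Mini_1$. For an iterated method $M$ and prior $\preceq$, the learner $L^\preceq_M$ maps a finite data sequence $\sigma$ to $\min_{\preceq'}S'$ where $M((S,\mathcal{O},\preceq),\sigma)=(S',\mathcal{O},\preceq')$. A world $s$ is identified in the limit by a learner $L$ if for every stream $\vec O$ sound and complete for $s$ there is $k$ with $L(\vec O[n])=\{s\}$ for all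 $n\ge k$; $\mathbb{S}$ is identified by $L$ if every $s\in S$ is; $\mathbb{S}$ is identifiable in the limit by the method $M$ if there is a total preorder $\preceq$ on $S$ such that $L^\preceq_M$ identifies $\mathbb{S}$ in the limit. *)

(* Defs.v *)
From Stdlib Require Import List Arith ClassicalDescription.
Import ListNotations.

Set Implicit Arguments.

(* An epistemic space (S, O): the set of worlds S is the carrier type W itself
   (assumed non-empty and at most countable), observables are O : (W -> Prop) -> Prop. *)
Definition at_most_countable (W : Type) : Prop :=
  exists f : W -> nat, forall x y, f x = f y -> x = y.

Definition total_preorder (W : Type) (le : W -> W -> Prop) : Prop :=
  (forall x, le x x) /\
  (forall x y z, le x y -> le y z -> le x z) /\
  (forall x y, le x y \/ le y x).

(* A plausibility state: current set of worlds S' and preorder on it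
   (the observables O never change, so they are not stored). *)
Record pstate (W : Type) := PState { st_S : W -> Prop; st_le : W -> W -> Prop }.

Definition minset (W : Type) (le : W -> W -> Prop) (X : W -> Prop) : W -> Prop :=
  fun x => X x /\ forall y, X y -> le y x -> le x y.

Definition cond1 (W : Type) (B : pstate W) (p : W -> Prop) : pstate W :=
  PState (fun w => st_S B w /\ p w)
         (fun t w => (st_S B t /\ p t) /\ (st_S B w /\ p w) /\ st_le B t w).

Definition lex1 (W : Type) (B : pstate W) (p : W -> Prop) : pstate W :=
  PState (st_S B)
         (fun t w => (p t /\ p w /\ st_le B t w) \/
                     (~ p t /\ ~ p w /\ st_le B t w) \/
                     (p t /\ ~ p w)).

Definition mini1 (W : Type) (B : pstate W) (p : W -> Prop) : pstate W :=
  let m := minset (st_le B) (fun w => st_S B w /\ p w) in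
  PState (st_S B)
         (fun t w => (m t /\ ~ m w) \/
                     (~ (m t /\ ~ m w) /\ ~ (~ m t /\ m w) /\ st_le B t w)).

Inductive method := MCond | MLex | MMini.

Definition one_step (m : method) (W : Type) : pstate W -> (W -> Prop) -> pstate W :=
  match m with
  | MCond => @cond1 W
  | MLex => @lex1 W
  | MMini => @mini1 W
  end.

Definition iter_rev (m : method) (W : Type) (B : pstate W) (sigma : list (W -> Prop))
  : pstate W := fold_left (@one_step m W) sigma B.

Fixpoint occ (W : Type) (p : W -> Prop) (sigma : list (W -> Prop)) : nat :=
  match sigma with
  | [] => 0
  | q :: s => (if excluded_middle_informative (q = p) then 1 else 0) + occ p s
  end.

Definition compl (W : Type) (p : W -> Prop) : W -> Prop := fun w => ~ p w.

(* Confirmation-biased iterated method, computed on the reversed sequence: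
   cb (p :: rsigma) handles sigma . p where rsigma = rev sigma. *)
Fixpoint cb_rev (m : method) (W : Type) (D : (W -> Prop) -> nat) (B : pstate W)
  (rsigma : list (W -> Prop)) : pstate W :=
  match rsigma with
  | [] => B
  | p :: rs =>
      if le_dec (D (compl p)) (occ p rs)
      then @one_step m W (cb_rev m D B rs) p
      else cb_rev m D B rs
  end.

Definition iter_cb (m : method) (W : Type) (D : (W -> Prop) -> nat) (B : pstate W)
  (sigma : list (W -> Prop)) : pstate W := cb_rev m D B (rev sigma).

Definition learner (W : Type) (M : pstate W -> list (W -> Prop) -> pstate W)
  (le : W -> W -> Prop) (sigma : list (W -> Prop)) : W -> Prop :=
  let B := M (PState (fun _ => True) le) sigma in minset (st_le B) (st_S B).

Definition stream (W : Type) := nat -> (W -> Prop).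

Definition prefix (W : Type) (str : stream W) (n : nat) : list (W -> Prop) :=
  map str (seq 0 n).

Definition stream_in (W : Type) (O : (W -> Prop) -> Prop) (str : stream W) : Prop :=
  forall n, O (str n).

Definition sound_for (W : Type) (str : stream W) (s : W) : Prop :=
  forall n, str n s.

Definition complete_for (W : Type) (O : (W -> Prop) -> Prop) (str : stream W) (s : W)
  : Prop := forall o, O o -> o s -> exists n, str n = o.

Definition identifies_world (W : Type) (O : (W -> Prop) -> Prop)
  (L : list (W -> Prop) -> W -> Prop) (s : W) : Prop :=
  forall str : stream W, stream_in O str -> sound_for str s -> complete_for O str s ->
    exists k, forall n, k <= n -> forall w, L (prefix str n) w <-> w = s.

Definition identifies (W : Type) (O : (W -> Prop) -> Prop)
  (L : list (W -> Prop) -> W -> Prop) : Prop :=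
  forall s : W, identifies_world O L s.

Definition identifiable_by (W : Type) (O : (W -> Prop) -> Prop)
  (M : pstate W -> list (W -> Prop) -> pstate W) : Prop :=
  exists le : W -> W -> Prop, total_preorder le /\ identifies O (learner M le).

Definition identifiable (m : method) (W : Type) (O : (W -> Prop) -> Prop) : Prop :=
  identifiable_by O (@iter_rev m W).

Definition identifiable_CB (m : method) (W : Type) (D : (W -> Prop) -> nat)
  (O : (W -> Prop) -> Prop) : Prop :=
  identifiable_by O (@iter_cb m W D).

(* Main.v *)
Require Import Defs.
From Stdlib Require Import List Arith Lia Setoid Classical ClassicalDescription.
Import ListNotations.
Set Implicit Arguments.

Definition peq {W} (B1 B2 : pstate W) : Prop :=
  (forall w, st_S B1 w <-> st_S B2 w) /\ (forall t w, st_le B1 t w <-> st_le B2 t w).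

Lemma peq_refl W (B : pstate W) : peq B B.
Proof. split; intros; tauto. Qed.
Lemma peq_sym W (B1 B2 : pstate W) : peq B1 B2 -> peq B2 B1.
Proof. intros [H1 H2]; split; intros; [rewrite H1|rewrite H2]; tauto. Qed.
Lemma peq_trans W (B1 B2 B3 : pstate W) : peq B1 B2 -> peq B2 B3 -> peq B1 B3.
Proof. intros [H1 H2] [H3 H4]; split; intros; [rewrite H1, H3|rewrite H2, H4]; tauto. Qed.

Lemma minset_ext W (le1 le2 : W -> W -> Prop) (X1 X2 : W -> Prop) :
  (forall t w, le1 t w <-> le2 t w) -> (forall w, X1 w <-> X2 w) ->
  forall w, minset le1 X1 w <-> minset le2 X2 w.
Proof.
  intros Hl HX w; unfold minset; split; intros [Hx H]; split.
  - apply HX; auto.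
  - intros y Hy Hyx. apply Hl. apply H; [apply HX|apply Hl]; auto.
  - apply HX; auto.
  - intros y Hy Hyx. apply Hl. apply H; [apply HX|apply Hl]; auto.
Qed.

Lemma learner_peq W (B1 B2 : pstate W) : peq B1 B2 ->
  forall w, minset (st_le B1) (st_S B1) w <-> minset (st_le B2) (st_S B2) w.
Proof. intros [H1 H2]; apply minset_ext; auto. Qed.

Lemma one_step_peq m W (B1 B2 : pstate W) p :
  peq B1 B2 -> peq (one_step m B1 p) (one_step m B2 p).
Proof.
  intros [HS Hl]; destruct m; simpl.
  - unfold cond1; split; simpl; intros; rewrite ?HS, ?Hl; tauto.
  - unfold lex1; split; simpl; intros; rewrite ?HS, ?Hl; tauto.
  - unfold mini1; split; simpl; intros; [apply HS|].
    assert (Hm : forall x, minset (st_le B1) (fun w => st_S B1 w /\ p w) x <->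
                           minset (st_le B2) (fun w => st_S B2 w /\ p w) x).
    { apply minset_ext; auto. intros; rewrite HS; tauto. }
    rewrite (Hm t), (Hm w), (Hl t w). tauto.
Qed.

Lemma mini_core W (S p : W -> Prop) (le : W -> W -> Prop) :
  forall x,
  minset (fun t w => (minset le (fun w => S w /\ p w) t /\ ~ minset le (fun w => S w /\ p w) w) \/
     (~ (minset le (fun w => S w /\ p w) t /\ ~ minset le (fun w => S w /\ p w) w) /\
      ~ (~ minset le (fun w => S w /\ p w) t /\ minset le (fun w => S w /\ p w) w) /\ le t w))
    (fun w => S w /\ p w) x <-> minset le (fun w => S w /\ p w) x.
Proof.
  set (m := minset le (fun w => S w /\ p w)).
  intros x; split.
  - intros [Hx H]. destruct (classic (m x)) as [mx|nmx]; auto. exfalso.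
    destruct (classic (exists y, m y)) as [[y my]|nex].
    + assert (Hy : S y /\ p y) by (destruct my; auto).
      destruct (H y Hy (or_introl (conj my nmx))) as [[mx' _]|[_ [h _]]].
      * contradiction.
      * apply h; auto.
    + apply nmx. split; auto. intros y Hy Hle.
      destruct (H y Hy) as [[mx' _]|[_ [_ h]]].
      * right. split; [intros [my _]; apply nex; eauto|].
        split; [intros [_ mx']; apply nex; eauto|auto].
      * exfalso; apply nex; eauto.
      * auto.
  - intros mx. pose proof mx as [Hx H]. split; auto. intros y Hy Hle'.
    destruct Hle' as [[my nmx]|[h1 [h2 hle]]].
    + contradiction.
    + assert (my : m y) by (destruct (classic (m y)); auto; exfalso; apply h2; auto).
      right. split; [tauto|split; [tauto|]]. apply H; auto.
Qed.

Lemma one_step_idem m W (B : pstate W) p :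
  peq (one_step m (one_step m B p) p) (one_step m B p).
Proof.
  destruct m; simpl.
  - unfold cond1; split; simpl; intros; tauto.
  - unfold lex1; split; simpl; intros; tauto.
  - unfold mini1; split; simpl; intros; [tauto|].
    rewrite !mini_core. tauto.
Qed.

Lemma iter_rev_S m W (B : pstate W) (str : stream W) n :
  iter_rev m B (prefix str (S n)) = one_step m (iter_rev m B (prefix str n)) (str n).
Proof. unfold iter_rev, prefix. rewrite seq_S, map_app, fold_left_app. reflexivity. Qed.

Lemma rev_prefix_S W (str : stream W) n :
  rev (prefix str (S n)) = str n :: rev (prefix str n).
Proof. unfold prefix. rewrite seq_S, map_app, rev_app_distr. reflexivity. Qed.

Lemma iter_cb_S m W D (B : pstate W) (str : stream W) n :
  iter_cb m D B (prefix str (S n)) =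
  if le_dec (D (compl (str n))) (occ (str n) (rev (prefix str n)))
  then one_step m (iter_cb m D B (prefix str n)) (str n)
  else iter_cb m D B (prefix str n).
Proof. unfold iter_cb. rewrite rev_prefix_S. reflexivity. Qed.

Lemma occ_self W (p : W -> Prop) l : occ p (p :: l) = S (occ p l).
Proof. simpl. destruct (excluded_middle_informative (p = p)); [reflexivity|contradiction]. Qed.

Lemma occ_ge W (p q : W -> Prop) l : occ p l <= occ p (q :: l).
Proof. simpl. lia. Qed.

Fixpoint gb W (D : (W -> Prop) -> nat) (str : stream W) (n : nat) : nat * nat :=
  match n with
  | 0 => (0, D (compl (str 0)))
  | S n' => let (i, r) := @gb W D str n' in
            match r with
            | 0 => (S i, D (compl (str (S i))))
            | S r' => (i, r')
            end
  end.

Definition str2 W (D : (W -> Prop) -> nat) (str : stream W) : stream W :=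
  fun n => str (fst (gb D str n)).

Lemma str2_eq W D (str : stream W) n i r : gb D str n = (i, r) -> str2 D str n = str i.
Proof. unfold str2; intros H; rewrite H; reflexivity. Qed.

Lemma gb_fst W D (str : stream W) n : fst (gb D str n) <= n.
Proof.
  induction n; simpl; auto.
  destruct (gb D str n) as [i r]; destruct r; simpl in *; lia.
Qed.

Lemma gb_reach W D (str : stream W) r : forall n i, gb D str n = (i, r) -> gb D str (n + r) = (i, 0).
Proof.
  induction r; intros n i H.
  - rewrite Nat.add_0_r; auto.
  - replace (n + S r) with (S n + r) by lia. apply IHr. simpl. rewrite H. reflexivity.
Qed.

Lemma gb_all W D (str : stream W) i : exists n, gb D str n = (i, 0).
Proof.
  induction i.
  - exists (0 + D (compl (str 0))). apply gb_reach. reflexivity.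
  - destruct IHi as [n Hn]. exists (S n + D (compl (str (S i)))). apply gb_reach.
    simpl. rewrite Hn. reflexivity.
Qed.

Lemma cb_inv m W D (str : stream W) (le : W -> W -> Prop) n : forall i r,
  gb D str n = (i, r) ->
  (peq (iter_cb m D (PState (fun _ => True) le) (prefix (str2 D str) (S n)))
       (iter_rev m (PState (fun _ => True) le) (prefix str (S i))) \/
   (0 < r /\ peq (iter_cb m D (PState (fun _ => True) le) (prefix (str2 D str) (S n)))
       (iter_rev m (PState (fun _ => True) le) (prefix str i)))) /\
  S (D (compl (str i))) <= occ (str i) (rev (prefix (str2 D str) (S n))) + r.
Proof.
  set (B := PState (fun _ => True) le).
  induction n; intros i r Hg.
  - simpl in Hg. injection Hg as <- <-.
    rewrite iter_cb_S, rev_prefix_S, !(str2_eq D str 0 eq_refl), iter_rev_S.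
    simpl prefix. simpl rev. unfold iter_rev, iter_cb. simpl fold_left. simpl cb_rev.
    rewrite occ_self. simpl occ.
    destruct (le_dec _ _) as [Hle|Hle].
    + split; [left; apply peq_refl|lia].
    + split; [right; split; [lia|apply peq_refl]|lia].
  - simpl in Hg. destruct (gb D str n) as [i0 r0] eqn:Hg0.
    destruct (IHn i0 r0 eq_refl) as [Ha Hb].
    rewrite iter_cb_S, (rev_prefix_S (str2 D str) (S n)).
    destruct r0 as [|r1].
    + injection Hg as <- <-.
      rewrite (str2_eq D str (S n) (i:=S i0) (r:=D (compl (str (S i0))))) by (simpl; rewrite Hg0; reflexivity).
      rewrite occ_self.
      destruct Ha as [Ha|[Hlt _]]; [|lia].
      destruct (le_dec _ _) as [Hle|Hle].
      * split; [left|lia]. rewrite (iter_rev_S m B str (S i0)). apply one_step_peq; auto.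
      * split; [right; split; [lia|auto]|lia].
    + injection Hg as <- <-.
      rewrite (str2_eq D str (S n) (i:=i0) (r:=r1)) by (simpl; rewrite Hg0; reflexivity).
      rewrite occ_self.
      split; [|lia].
      destruct (le_dec _ _) as [Hle|Hle].
      * left. rewrite (iter_rev_S m B str i0) in *.
        destruct Ha as [Ha|[_ Ha]].
        -- eapply peq_trans; [apply one_step_peq; exact Ha|apply one_step_idem].
        -- apply one_step_peq; auto.
      * destruct Ha as [Ha|[_ Ha]]; [left; auto|right; split; [lia|auto]].
Qed.

Lemma part1 m W D (O : (W -> Prop) -> Prop) : identifiable_CB m D O -> identifiable m O.
Proof.
  intros [le [Htp Hid]]. exists le. split; auto.
  intros s str Hin Hs Hc.
  assert (Hin2 : stream_in O (str2 D str)) by (intro n; apply Hin).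
  assert (Hs2 : sound_for (str2 D str) s) by (intro n; apply Hs).
  assert (Hc2 : complete_for O (str2 D str) s).
  { intros o Ho os. destruct (Hc o Ho os) as [j Hj]. destruct (gb_all D str j) as [N HN].
    exists N. rewrite (str2_eq D str N HN). auto. }
  destruct (Hid s (str2 D str) Hin2 Hs2 Hc2) as [k Hk].
  exists (S k). intros n Hn w.
  destruct n as [|i]; [lia|].
  destruct (gb_all D str i) as [N HN].
  assert (i <= N) by (pose proof (gb_fst D str N) as G; rewrite HN in G; exact G).
  specialize (Hk (S N) ltac:(lia) w).
  destruct (cb_inv m D str le N HN) as [[Hp|[Hlt _]] _]; [|lia].
  unfold learner in *; cbv zeta in *.
  eapply iff_trans; [|exact Hk]. apply learner_peq, peq_sym, Hp.
Qed.

Definition Tp : bool -> Prop := fun _ => True.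
Definition F0 : bool -> Prop := fun w => w = false.
Definition O2 (o : bool -> Prop) : Prop := o = Tp \/ o = F0.
Definition le2 (t w : bool) : Prop := t = true \/ w = false.
Definition D2 : (bool -> Prop) -> nat := fun _ => 1.

Lemma Tp_neq_F0 : Tp <> F0.
Proof. intro H. assert (F0 true) by (rewrite <- H; exact I). discriminate. Qed.

Lemma le2_tp : total_preorder le2.
Proof.
  unfold le2; repeat split.
  - intros []; auto.
  - intros [] [] []; intuition congruence.
  - intros [] []; auto.
Qed.

Definition ord (b : bool) : bool -> bool -> Prop :=
  if b then (fun t w => t = false \/ w = true) else le2.

Definition Inv (m : method) (B : pstate bool) (b : bool) : Prop :=
  match m with
  | MCond => (forall w, st_S B w <-> (b = true -> w = false)) /\
             (forall t w, st_le B t w <-> (st_S B t /\ st_S B w /\ le2 t w))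
  | _ => (forall w, st_S B w <-> True) /\ (forall t w, st_le B t w <-> ord b t w)
  end.

Lemma Inv_init m : Inv m (PState (fun _ => True) le2) false.
Proof.
  destruct m; simpl; split; intros; try tauto.
  split; [intros _ H; discriminate|tauto].
Qed.

Lemma minset_ord b x : minset (ord b) (fun _ => True) x <-> x = negb b.
Proof.
  unfold minset; split.
  - intros [_ H]. pose proof (H true I); pose proof (H false I).
    destruct b, x; simpl in *; unfold le2 in *; intuition congruence.
  - intros ->. split; [exact I|]. intros y _ Hy.
    destruct b, y; simpl in *; unfold le2 in *; intuition congruence.
Qed.

Lemma minset_false (R : bool -> bool -> Prop) (S : bool -> Prop) x :
  S false -> R false false -> (minset R (fun w => S w /\ w = false) x <-> x = false).
Proof.
  intros HS HR; unfold minset; split.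
  - intros [[_ H] _]; auto.
  - intros ->. split; [auto|]. intros y [_ ->] _; auto.
Qed.

Lemma Inv_out m B b : Inv m B b -> forall w, minset (st_le B) (st_S B) w <-> w = negb b.
Proof.
  destruct m; simpl; intros [HS Hl] w.
  - destruct b; simpl.
    + rewrite (minset_ext _ (fun t w => (fun w => True /\ w = false) t /\
          (fun w => True /\ w = false) w /\ le2 t w) _ (fun w => True /\ w = false)).
      * apply minset_false; auto. repeat split; auto. right; auto.
      * intros t u. rewrite Hl, !HS. intuition.
      * intros u. rewrite HS. intuition.
    + rewrite (minset_ext _ (ord false) _ (fun _ => True)).
      * apply minset_ord.
      * intros t u. rewrite Hl, !HS. simpl. intuition discriminate.
      * intros u. rewrite HS. intuition discriminate.
  - rewrite (minset_ext _ (ord b) _ (fun _ => True)); auto. apply minset_ord.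
  - rewrite (minset_ext _ (ord b) _ (fun _ => True)); auto. apply minset_ord.
Qed.

Lemma Inv_T m B b : Inv m B b -> Inv m (one_step m B Tp) b.
Proof.
  destruct m; simpl; intros [HS Hl].
  - unfold cond1, Tp; split; simpl; intros; [rewrite HS|rewrite Hl]; tauto.
  - unfold lex1, Tp; split; simpl; intros; [rewrite HS|rewrite Hl]; tauto.
  - unfold mini1; split; simpl; intros t; [rewrite HS; tauto|intros w].
    assert (Hm : forall x, minset (st_le B) (fun w => st_S B w /\ Tp w) x <-> x = negb b).
    { intros x. rewrite (minset_ext _ (ord b) _ (fun _ => True)); auto.
      apply minset_ord. intros; rewrite HS; unfold Tp; tauto. }
    rewrite (Hm t), (Hm w), Hl.
    destruct b, t, w; simpl; unfold le2; intuition congruence.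
Qed.

Lemma Inv_F m B b : Inv m B b -> Inv m (one_step m B F0) true.
Proof.
  destruct m; simpl; intros [HS Hl].
  - unfold cond1, F0; split; simpl; intros.
    + rewrite HS. split; [intros [_ h] _; exact h|intros h; split; [intros _|]; apply h; reflexivity].
    + rewrite Hl. tauto.
  - unfold lex1, F0; split; simpl; intros t; [rewrite HS; tauto|intros w].
    rewrite Hl. destruct b, t, w; simpl; unfold le2; intuition congruence.
  - unfold mini1; split; simpl; intros t; [rewrite HS; tauto|intros w].
    assert (Hm : forall x, minset (st_le B) (fun w => st_S B w /\ F0 w) x <-> x = false).
    { intros x. apply minset_false; [apply HS; exact I|apply Hl]. destruct b; simpl; unfold le2; auto. }
    rewrite (Hm t), (Hm w), Hl.
    destruct b, t, w; simpl; unfold le2; intuition congruence.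
Qed.

Lemma ident2 m : identifiable m O2.
Proof.
  exists le2. split; [apply le2_tp|].
  intros s str Hin Hs Hc.
  destruct s.
  - assert (Hstr : forall n, str n = Tp).
    { intro n. destruct (Hin n) as [E|E]; auto. pose proof (Hs n) as H. rewrite E in H.
      discriminate. }
    assert (HI : forall n, Inv m (iter_rev m (PState (fun _ => True) le2) (prefix str n)) false).
    { induction n; [apply Inv_init|]. rewrite iter_rev_S, Hstr. apply Inv_T; auto. }
    exists 0. intros n _ w. unfold learner; cbv zeta. exact (Inv_out _ _ _ (HI n) w).
  - destruct (Hc F0 (or_intror eq_refl) eq_refl) as [n0 Hn0].
    assert (HI : forall n, exists b, Inv m (iter_rev m (PState (fun _ => True) le2) (prefix str n)) b
                                    /\ (n0 < n -> b = true)).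
    { induction n.
      - exists false. split; [apply Inv_init|lia].
      - destruct IHn as [b [HI Hb]]. rewrite iter_rev_S.
        destruct (Hin n) as [E|E]; rewrite E.
        + exists b. split; [apply Inv_T; auto|]. intros Hlt.
          destruct (Nat.eq_dec n0 n) as [->|Hne]; [|apply Hb; lia].
          exfalso. apply Tp_neq_F0. congruence.
        + exists true. split; [eapply Inv_F; eauto|auto]. }
    exists (S n0). intros n Hn w. destruct (HI n) as [b [HIn Hb]].
    rewrite Hb in HIn by lia. unfold learner; cbv zeta. exact (Inv_out _ _ _ HIn w).
Qed.

Definition str1 : stream bool := fun _ => Tp.
Definition str0 : stream bool := fun n => match n with 0 => F0 | S _ => Tp end.

Lemma occ1 n : occ Tp (rev (prefix str1 n)) = n.
Proof. induction n; auto. rewrite rev_prefix_S. unfold str1 at 1. rewrite occ_self, IHn. reflexivity. Qed.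

Lemma occ0 n : occ Tp (rev (prefix str0 (S n))) = n.
Proof.
  induction n.
  - simpl. destruct (excluded_middle_informative (F0 = Tp)) as [E|]; auto.
    exfalso; apply Tp_neq_F0; auto.
  - rewrite rev_prefix_S. simpl str0. rewrite occ_self, IHn. reflexivity.
Qed.

Lemma cb1 m B n : iter_cb m D2 B (prefix str1 (S n)) = Nat.iter n (fun X => one_step m X Tp) B.
Proof.
  induction n.
  - rewrite iter_cb_S. simpl. unfold D2. destruct (le_dec 1 0); [lia|reflexivity].
  - rewrite iter_cb_S. change (str1 (S n)) with Tp. rewrite occ1. unfold D2.
    destruct (le_dec 1 (S n)); [|lia]. unfold D2 in IHn. rewrite IHn. reflexivity.
Qed.

Lemma cb0 m B n : iter_cb m D2 B (prefix str0 (S (S n))) = Nat.iter n (fun X => one_step m X Tp) B.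
Proof.
  induction n.
  - rewrite iter_cb_S. simpl str0. rewrite (occ0 0). unfold D2. destruct (le_dec 1 0); [lia|].
    rewrite iter_cb_S. simpl. destruct (le_dec 1 0); [lia|reflexivity].
  - rewrite iter_cb_S. simpl str0. rewrite (occ0 (S n)). unfold D2.
    destruct (le_dec 1 (S n)); [|lia]. unfold D2 in IHn. rewrite IHn. reflexivity.
Qed.

Lemma notCB m : ~ identifiable_CB m D2 O2.
Proof.
  intros [le [_ Hid]].
  destruct (Hid true str1) as [k1 H1].
  { intro n; left; reflexivity. }
  { intro n; exact I. }
  { intros o [->| ->] Ho; [exists 0; reflexivity|discriminate]. }
  destruct (Hid false str0) as [k0 H0].
  { intros [|n]; [right|left]; reflexivity. }
  { intros [|n]; [reflexivity|exact I]. }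
  { intros o [->| ->] Ho; [exists 1; reflexivity|exists 0; reflexivity]. }
  specialize (H1 (S (k0 + k1)) ltac:(lia) true).
  specialize (H0 (S (S (k0 + k1))) ltac:(lia) true).
  unfold learner in *; cbv zeta in *.
  rewrite cb1 in H1. rewrite cb0 in H0.
  assert (true = false) by (apply H0, H1; reflexivity). discriminate.
Qed.

Theorem mainTheorem1 : forall m : method,
  (forall (W : Type) (D : (W -> Prop) -> nat) (O : (W -> Prop) -> Prop),
      at_most_countable W -> inhabited W ->
      identifiable_CB m D O -> identifiable m O) /\
  (exists (W : Type) (D : (W -> Prop) -> nat) (O : (W -> Prop) -> Prop),
      at_most_countable W /\ inhabited W /\
      identifiable m O /\ ~ identifiable_CB m D O).
Proof.
  intros m. split.
  - intros W D O _ _. apply part1.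
  - exists bool, D2, O2. split; [|split; [exact (inhabits true)|split; [apply ident2|apply notCB]]].
    exists (fun b : bool => if b then 1 else 0). intros [] []; simpl; congruence.
Qed.
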